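(* Let $f(x)=\sum_{i=1}^Bp_i\|x_{(i)}\|$ with $p_i>0$, where $x=(x_{(1)},\dots,x_{(B)})$, $x_{(i)}\in\mathbb{R}^{n_i}$, $\sum_in_i=n$, and let $g:\mathbb{R}^n\to\mathbb{R}$ be differentiable and strongly convex. Consider $\min_{x}f(x)$ s.t. $g(x)\le0$. Assume there is $\tilde x$ with $g(\tilde x)<0$, and that every minimizer $x_0^*$ of $f$ over $\mathbb{R}^n$ satisfies $g(x_0^* )>0$. Then the KKT point of this problem is unique, i.e. there is exactly one pair $(x^*,y^* )\in\mathbb{R}^n\times\mathbb{R}_+$ with $0\in\partial f(x^* )+y^*\nabla g(x^* )$ and $y^*g(x^* )=0$.
   Context: $\|\cdot\|$ is the Euclidean norm; $\partial f$ is the convex subdifferential. *)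

(* Defs.v *)
From HB Require Import structures.
From mathcomp Require Import all_boot all_order all_algebra.
From mathcomp Require Import all_classical all_reals all_analysis.
Set Implicit Arguments. Unset Strict Implicit. Unset Printing Implicit Defensive.
Import Order.TTheory GRing.Theory Num.Theory.
Import numFieldNormedType.Exports.
Local Open Scope ring_scope.

Definition dotv (R : realType) (n : nat) (u v : 'rV[R]_n) : R :=
  \sum_(j < n) u 0 j * v 0 j.

Definition enorm (R : realType) (n : nat) (u : 'rV[R]_n) : R :=
  Num.sqrt (dotv u u).

(* Block structure: blk j = i means coordinate j belongs to block x_(i).
   The block x_(i) has n_i = #{j | blk j = i} coordinates, and sum n_i = n.
   Euclidean norm of the block x_(i): *)
Definition block_norm (R : realType) (n B : nat) (blk : 'I_n -> 'I_B)
    (x : 'rV[R]_n) (i : 'I_B) : R :=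
  Num.sqrt (\sum_(j < n | blk j == i) x 0 j ^+ 2).

Definition group_norm (R : realType) (n B : nat) (blk : 'I_n -> 'I_B)
    (p : 'I_B -> R) (x : 'rV[R]_n) : R :=
  \sum_(i < B) p i * block_norm blk x i.

Definition subgrad (R : realType) (n : nat) (f : 'rV[R]_n -> R)
    (x v : 'rV[R]_n) : Prop :=
  forall z : 'rV[R]_n, f x + dotv v (z - x) <= f z.

Definition grad (R : realType) (n : nat) (g : 'rV[R]_n -> R)
    (x : 'rV[R]_n) : 'rV[R]_n :=
  \row_(j < n) ('d g x (delta_mx 0 j : 'rV[R]_n)).

Definition strongly_convex (R : realType) (n : nat) (g : 'rV[R]_n -> R) : Prop :=
  exists2 mu : R, 0 < mu &
    forall (x y : 'rV[R]_n) (t : R), 0 <= t -> t <= 1 ->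
      g (t *: x + (1 - t) *: y)
        <= t * g x + (1 - t) * g y - mu / 2 * t * (1 - t) * enorm (x - y) ^+ 2.

Definition KKT (R : realType) (n : nat) (f g : 'rV[R]_n -> R)
    (x : 'rV[R]_n) (y : R) : Prop :=
  [/\ 0 <= y, g x <= 0, y * g x = 0 &
      exists2 v : 'rV[R]_n, subgrad f x v & v + y *: grad g x = 0].

(* Main.v *)
Require Import Defs.
From HB Require Import structures.
From mathcomp Require Import all_boot all_order all_algebra.
From mathcomp Require Import all_classical all_reals all_analysis.
From mathcomp Require Import ring lra.
Import Order.TTheory GRing.Theory Num.Theory.
Import numFieldNormedType.Exports.

Module M0.
Set Implicit Arguments. Unset Strict Implicit. Unset Printing Implicit Defensive.
Local Open Scope ring_scope.
Local Open Scope classical_set_scope.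

Section Alg.
Variables (R : realType) (n : nat).
Implicit Types (u v w : 'rV[R]_n).

Lemma dotvC u v : dotv u v = dotv v u.
Proof. by apply: eq_bigr => j _; rewrite mulrC. Qed.

Lemma dotvDl u v w : dotv (u + w) v = dotv u v + dotv w v.
Proof. by rewrite /dotv -big_split; apply: eq_bigr => j _; rewrite mxE mulrDl. Qed.

Lemma dotvZl a u v : dotv (a *: u) v = a * dotv u v.
Proof. by rewrite /dotv mulr_sumr; apply: eq_bigr => j _; rewrite mxE mulrA. Qed.

Lemma dotvNl u v : dotv (- u) v = - dotv u v.
Proof. by rewrite -scaleN1r dotvZl mulN1r. Qed.

Lemma dotvBl u w v : dotv (u - w) v = dotv u v - dotv w v.
Proof. by rewrite dotvDl dotvNl. Qed.

Lemma dotvDr u v w : dotv v (u + w) = dotv v u + dotv v w.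
Proof. by rewrite dotvC dotvDl !(dotvC v). Qed.

Lemma dotvZr a u v : dotv v (a *: u) = a * dotv v u.
Proof. by rewrite dotvC dotvZl dotvC. Qed.

Lemma dotvBr u w v : dotv v (u - w) = dotv v u - dotv v w.
Proof. by rewrite dotvC dotvBl !(dotvC v). Qed.

Lemma dotv0l v : dotv 0 v = 0.
Proof. by rewrite /dotv big1 // => j _; rewrite mxE mul0r. Qed.

Lemma dotv_ge0 u : 0 <= dotv u u.
Proof. by apply: sumr_ge0 => j _; rewrite -expr2 sqr_ge0. Qed.

Lemma enorm_ge0 u : 0 <= enorm u.
Proof. exact: sqrtr_ge0. Qed.

Lemma enorm_sq u : enorm u ^+ 2 = dotv u u.
Proof. by rewrite sqr_sqrtr // dotv_ge0. Qed.

Lemma coord_le_dot u j : u 0 j ^+ 2 <= dotv u u.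
Proof.
rewrite /dotv (bigD1 j) //= -expr2 lerDl.
by apply: sumr_ge0 => k _; rewrite -expr2 sqr_ge0.
Qed.

Lemma coord_le_enorm u j : `|u 0 j| <= enorm u.
Proof. by rewrite -sqrtr_sqr ler_sqrt ?dotv_ge0 // coord_le_dot. Qed.

Lemma dotv_eq0 u : dotv u u = 0 -> u = 0.
Proof.
move=> h; apply/rowP => j; rewrite mxE; apply/eqP; rewrite -sqrf_eq0.
by rewrite eq_le sqr_ge0 andbT -h coord_le_dot.
Qed.

Lemma CS_sq u v : dotv u v ^+ 2 <= dotv u u * dotv v v.
Proof.
set A := dotv u u; set Bv := dotv v v; set C := dotv u v.
have h := dotv_ge0 (Bv *: u - C *: v).
rewrite !dotvBl !dotvBr !dotvZl !dotvZr -/A -/C (dotvC v u) -/C -/Bv in h.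
have hB : 0 <= Bv by exact: dotv_ge0.
case: (ltrP 0 Bv) => hb.
  have : 0 <= Bv * (A * Bv - C ^+ 2) by move: h; congr (_ <= _); ring.
  by rewrite pmulr_rge0 // subr_ge0.
have B0 : Bv = 0 by apply/eqP; rewrite eq_le hb hB.
have v0 : v = 0 by apply: dotv_eq0.
by rewrite /C v0 dotvC dotv0l expr0n /= mulr_ge0 // ?dotv_ge0 // B0.
Qed.

Lemma CS u v : dotv u v <= enorm u * enorm v.
Proof.
rewrite -sqrtrM ?dotv_ge0 //.
apply: le_trans (ler_norm _) _.
by rewrite -sqrtr_sqr ler_sqrt ?CS_sq // mulr_ge0 // dotv_ge0.
Qed.

Lemma enorm_triangle u v : enorm (u + v) <= enorm u + enorm v.
Proof.
rewrite -(ler_pXn2r (isT : (0 < 2)%N)) ?nnegrE ?addr_ge0 ?enorm_ge0 //.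
rewrite enorm_sq !dotvDl !dotvDr sqrrD !enorm_sq (dotvC v u).
have := CS u v; lra.
Qed.

Lemma enormZ a u : enorm (a *: u) = `|a| * enorm u.
Proof.
by rewrite /enorm dotvZl dotvZr mulrA -expr2 sqrtrM ?sqr_ge0 // sqrtr_sqr.
Qed.

End Alg.

End M0.
Import M0.

Module M1.
Set Implicit Arguments. Unset Strict Implicit. Unset Printing Implicit Defensive.
Local Open Scope ring_scope.
Local Open Scope classical_set_scope.

Section F.
Variables (R : realType) (n B : nat) (blk : 'I_n -> 'I_B) (p : 'I_B -> R).
Hypothesis hp : forall i, 0 < p i.
Implicit Types (u v w : 'rV[R]_n).

Definition mask i u : 'rV[R]_n := \row_j (if blk j == i then u 0 j else 0).

Lemma block_normE i u : block_norm blk u i = enorm (mask i u).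
Proof.
rewrite /block_norm /enorm /dotv big_mkcond /=; congr Num.sqrt.
by apply: eq_bigr => j _; rewrite mxE; case: ifP; rewrite ?mulr0 // expr2.
Qed.

Lemma maskD i u v : mask i (u + v) = mask i u + mask i v.
Proof. by apply/rowP => j; rewrite !mxE; case: ifP; rewrite ?addr0 // mxE. Qed.

Lemma maskZ i a u : mask i (a *: u) = a *: mask i u.
Proof. by apply/rowP => j; rewrite !mxE; case: ifP; rewrite ?mulr0 // mxE. Qed.

Lemma mask0 i : mask i 0 = 0.
Proof. by apply/rowP => j; rewrite !mxE; case: ifP; rewrite // mxE. Qed.

Local Notation f := (group_norm blk p).

Lemma f_ge0 u : 0 <= f u.
Proof. apply: sumr_ge0 => i _; apply: mulr_ge0; [exact/ltW/hp | rewrite block_normE; exact: enorm_ge0]. Qed.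

Lemma f_triangle u v : f (u + v) <= f u + f v.
Proof.
rewrite /group_norm -big_split /=; apply: ler_sum => i _.
rewrite -mulrDr; apply: ler_wpM2l; first exact/ltW/hp.
rewrite !block_normE maskD; exact: enorm_triangle.
Qed.

Lemma fZ a u : f (a *: u) = `|a| * f u.
Proof.
rewrite /group_norm mulr_sumr; apply: eq_bigr => i _.
by rewrite !block_normE maskZ enormZ mulrCA.
Qed.

Lemma f0 : f 0 = 0.
Proof. by rewrite -(scale0r 0) fZ normr0 mul0r. Qed.

Lemma f_convex t u v : 0 <= t -> t <= 1 ->
  f (t *: u + (1 - t) *: v) <= t * f u + (1 - t) * f v.
Proof.
move=> t0 t1; apply: le_trans (f_triangle _ _) _.
by rewrite !fZ !ger0_norm // subr_ge0.
Qed.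

Lemma f_le_enorm u : f u <= (\sum_i p i) * enorm u.
Proof.
rewrite /group_norm mulr_suml; apply: ler_sum => i _.
apply: ler_wpM2l; first exact/ltW/hp.
rewrite block_normE ler_sqrt ?dotv_ge0 //.
rewrite /dotv; apply: ler_sum => j _; rewrite mxE; case: ifP => _; first by [].
by rewrite mul0r -expr2 sqr_ge0.
Qed.

End F.

End M1.
Import M1.

Module M2.
Set Implicit Arguments. Unset Strict Implicit. Unset Printing Implicit Defensive.
Local Open Scope ring_scope.
Local Open Scope classical_set_scope.

Section D.
Variables (R : realType) (n : nat).
Implicit Types (u v w x d : 'rV[R]_n) (g : 'rV[R]_n -> R).

Lemma grad_dot g x d : differentiable g x -> 'd g x d = dotv (grad g x) d.
Proof.
move=> _.
rewrite {1}(matrix_sum_delta d) linear_sum /dotv.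
rewrite big_ord1 linear_sum; apply: eq_bigr => j _.
by rewrite linearZ /= mxE mulrC.
Qed.

Lemma quot_cvg g x d : differentiable g x ->
  (fun s : R => s^-1 * (g (x + s *: d) - g x)) @ 0^'+ --> dotv (grad g x) d.
Proof.
move=> dg.
have h : (fun h : R => h^-1 *: ((g \o shift x) (h *: d) - g x)) @ 0^' --> 'D_d g x.
  exact: (@diff_derivable _ _ _ g x d dg).
rewrite -grad_dot // -deriveE //.
have -> : (fun s : R => s^-1 * (g (x + s *: d) - g x)) =
  (fun h : R => h^-1 *: ((g \o shift x) (h *: d) - g x)).
  by apply/funext => s /=; rewrite [x + _]addrC.
exact: (cvg_dnbhs_at_right h).
Qed.

End D.

Section L.
Variable R : realType.

Lemma aff_cvg (c K : R) : (fun s : R => c + s * K) @ 0^'+ --> c.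
Proof.
apply: cvg_at_right_filter.
rewrite -[X in _ --> X]addr0 -[X in _ --> _ + X](mul0r K).
apply: cvgD; first exact: cvg_cst.
apply: cvgMl; exact: cvg_id.
Qed.

Lemma lim_le_aff (q : R -> R) L c K : q @ 0^'+ --> L ->
  (forall s, 0 < s -> s < 1 -> q s <= c + s * K) -> L <= c.
Proof.
move=> hq hle.
apply: (ler_cvg_to hq (@aff_cvg c K)).
near=> s; apply: hle.
- by near: s; exact: nbhs_right_gt.
- by near: s; exact: nbhs_right_lt.
Unshelve. all: by end_near.
Qed.

Lemma lim_ge_cst (q : R -> R) L c : q @ 0^'+ --> L ->
  (forall s, 0 < s -> s < 1 -> c <= q s) -> c <= L.
Proof.
move=> hq hle.
apply: (ler_cvg_to (cvg_cst c) hq).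
near=> s; apply: hle.
- by near: s; exact: nbhs_right_gt.
- by near: s; exact: nbhs_right_lt.
Unshelve. all: by end_near.
Qed.

End L.

End M2.
Import M2.

Module M3.
Set Implicit Arguments. Unset Strict Implicit. Unset Printing Implicit Defensive.
Local Open Scope ring_scope.
Local Open Scope classical_set_scope.

Section M.
Variables (R : realType) (n : nat).
Implicit Types (d x : 'rV[R]_n).

Lemma coord_le_mx d j : `|d 0 j| <= `|d|.
Proof.
rewrite [leRHS]/Num.Def.normr /= mx_normrE.
exact: (le_bigmax _ _ (0, j)).
Qed.

Lemma mx_le_enorm d : `|d| <= enorm d.
Proof.
rewrite [leLHS]/Num.Def.normr /= mx_normrE; apply: bigmax_le => [|[i j] _].
  exact: enorm_ge0.
by rewrite /= (ord1 i); exact: coord_le_enorm.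
Qed.

Lemma enorm_le_mx d : enorm d <= Num.sqrt n%:R * `|d|.
Proof.
have M0 : 0 <= `|d| by [].
rewrite -[X in _ * X]ger0_norm // -sqrtr_sqr -sqrtrM // ler_sqrt; last first.
  by rewrite mulr_ge0 // sqr_ge0.
have -> : n%:R * `|d| ^+ 2 = \sum_(j < n) `|d| ^+ 2.
  by rewrite sumr_const card_ord mulr_natl.
rewrite /dotv; apply: ler_sum => j _; rewrite -expr2.
have h := coord_le_mx d j; have := normr_ge0 (d 0 j).
rewrite -[d 0 j ^+ 2]real_normK ?num_real //; nra.
Qed.

End M.

Section FC.
Variables (R : realType) (n B : nat) (blk : 'I_n -> 'I_B) (p : 'I_B -> R).
Hypothesis hp : forall i, 0 < p i.
Local Notation f := (group_norm blk p).

Lemma fN (u : 'rV[R]_n) : f (- u) = f u.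
Proof. by rewrite -scaleN1r fZ normrN normr1 mul1r. Qed.

Lemma f_lip (a b : 'rV[R]_n) : `|f a - f b| <= (\sum_i p i) * enorm (a - b).
Proof.
have h1 : f a <= f b + f (a - b).
  by have := f_triangle blk hp b (a - b); rewrite [b + _]addrC subrK.
have h2 : f b <= f a + f (a - b).
  by have := f_triangle blk hp a (b - a); rewrite [a + _]addrC subrK -opprB fN.
have h3 := f_le_enorm blk hp (a - b).
rewrite ler_norml; apply/andP; split; lra.
Qed.

Lemma f_continuous : continuous f.
Proof.
move=> a; apply/(@cvgrPdist_lt _ _ _ (nbhs a) _) => e e0.
set K := (\sum_i p i) * Num.sqrt n%:R.
have K0 : 0 <= K by rewrite mulr_ge0 ?sqrtr_ge0 // sumr_ge0 // => i _; exact/ltW/hp.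
have dpos : 0 < e / (K + 1) by rewrite divr_gt0 // ltr_wpDl.
near=> t.
have ht : `|a - t| < e / (K + 1).
  near: t; apply: (@cvgr_dist_lt _ _ _ (nbhs a) _ id a) => //; exact: cvg_id.
apply: le_lt_trans (f_lip a t) _.
have hs : 0 <= \sum_i p i by rewrite sumr_ge0 // => i _; exact/ltW/hp.
apply: le_lt_trans (_ : (\sum_i p i) * (Num.sqrt n%:R * `|a - t|) < e).
  by rewrite ler_wpM2l // enorm_le_mx.
rewrite mulrA -/K.
have : (K + 1) * `|a - t| < e by rewrite mulrC -ltr_pdivlMr // ltr_wpDl.
have := normr_ge0 (a - t); nra.
Unshelve. all: by end_near.
Qed.

End FC.

End M3.
Import M3.

Module M4.
Set Implicit Arguments. Unset Strict Implicit. Unset Printing Implicit Defensive.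
Local Open Scope ring_scope.
Local Open Scope classical_set_scope.

Section CA.
Variables (R : realType) (n : nat) (f g : 'rV[R]_n -> R) (mu : R).
Hypothesis hdiff : forall x, differentiable g x.
Hypothesis mu0 : 0 < mu.
Hypothesis hsc : forall (x y : 'rV[R]_n) (t : R), 0 <= t -> t <= 1 ->
      g (t *: x + (1 - t) *: y)
        <= t * g x + (1 - t) * g y - mu / 2 * t * (1 - t) * enorm (x - y) ^+ 2.
Hypothesis hfc : forall (x y : 'rV[R]_n) (t : R), 0 <= t -> t <= 1 ->
      f (t *: x + (1 - t) *: y) <= t * f x + (1 - t) * f y.

Lemma comb_eq (x z : 'rV[R]_n) s : s *: z + (1 - s) *: x = x + s *: (z - x).
Proof. by rewrite scalerBl scale1r scalerBr addrCA addrA. Qed.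

Lemma g_convex (x y : 'rV[R]_n) t : 0 <= t -> t <= 1 ->
  g (t *: x + (1 - t) *: y) <= t * g x + (1 - t) * g y.
Proof.
move=> t0 t1; apply: le_trans (hsc x y t0 t1) _.
rewrite lerBlDr lerDl; apply: mulr_ge0; last exact: sqr_ge0.
have : 0 <= mu / 2 by rewrite divr_ge0 // ltW.
move=> h2; apply: mulr_ge0; [exact: mulr_ge0 | by rewrite subr_ge0].
Qed.

Lemma GI (x z : 'rV[R]_n) :
  g x + dotv (grad g x) (z - x) + mu / 2 * enorm (z - x) ^+ 2 <= g z.
Proof.
set D := enorm (z - x) ^+ 2.
have hq := quot_cvg (d := z - x) (hdiff x).
have := lim_le_aff (c := g z - g x - mu / 2 * D) (K := mu / 2 * D) hq.
suff H : forall s : R, 0 < s -> s < 1 ->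
  s^-1 * (g (x + s *: (z - x)) - g x) <= g z - g x - mu / 2 * D + s * (mu / 2 * D).
  by move=> /(_ H); lra.
move=> s s0 s1.
have := hsc z x (ltW s0) (ltW s1); rewrite comb_eq -/D => h.
rewrite mulrC ler_pdivrMr //.
have -> : (g z - g x - mu / 2 * D + s * (mu / 2 * D)) * s =
  s * g z + (1 - s) * g x - mu / 2 * s * (1 - s) * D - g x by ring.
by rewrite lerD2r.
Qed.

Lemma subgrad_min (x : 'rV[R]_n) (y : R) : 0 <= y ->
  (forall z, f x + y * g x <= f z + y * g z) ->
  subgrad f x (- (y *: grad g x)).
Proof.
move=> y0 hmin z.
rewrite dotvNl dotvZl.
suff : f x - f z <= y * dotv (grad g x) (z - x) by lra.
have key : forall s : R, 0 < s -> s < 1 ->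
    s * (f x - f z) <= y * (g (x + s *: (z - x)) - g x).
  move=> s s0 s1.
  have h1 := hmin (x + s *: (z - x)).
  have h2 := hfc z x (ltW s0) (ltW s1); rewrite comb_eq in h2.
  lra.
case: (ltrP 0 y) => hy; last first.
  have y00 : y = 0 by apply/eqP; rewrite eq_le hy y0.
  subst y; rewrite mul0r.
  have := key (1/2) (ltac:(lra)) (ltac:(lra)).
  rewrite mul0r; lra.
rewrite mulrC -ler_pdivrMr //.
apply: (lim_ge_cst (quot_cvg (d := z - x) (hdiff x))) => s s0 s1.
set Q := g (x + s *: (z - x)) - g x.
rewrite ler_pdivrMr //.
have -> : s^-1 * Q * y = (y * Q) / s by field; lra.
rewrite ler_pdivlMr // mulrC; exact: key.
Qed.

End CA.

End M4.
Import M4.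

Local Open Scope classical_set_scope.
Local Open Scope ring_scope.

Theorem proposition5 (R : realType) (n B : nat) (blk : 'I_n -> 'I_B)
    (p : 'I_B -> R) (g : 'rV[R]_n -> R) :
  (forall i, 0 < p i) ->
  (forall x, differentiable g x) ->
  strongly_convex g ->
  (exists xt : 'rV[R]_n, g xt < 0) ->
  (forall x0 : 'rV[R]_n,
      (forall z, group_norm blk p x0 <= group_norm blk p z) -> 0 < g x0) ->
  exists x : 'rV[R]_n, exists y : R,
    KKT (group_norm blk p) g x y /\
    forall (x' : 'rV[R]_n) (y' : R),
      KKT (group_norm blk p) g x' y' -> x' = x /\ y' = y.
Proof.
move=> hp hdiff [mu mu0 hsc] [xt hxt] hmin.
set f := group_norm blk p.
have hfc : forall (x y : 'rV[R]_n) (t : R), 0 <= t -> t <= 1 ->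
    f (t *: x + (1 - t) *: y) <= t * f x + (1 - t) * f y.
  by move=> x y t t0 t1; exact: f_convex.
have hGI := GI hdiff hsc.
have ypos : forall x y, KKT f g x y -> 0 < y /\ g x = 0.
  move=> x y [y0 gx0 cs [v vs ve]].
  case: (ltrP 0 y) => hy; last first.
    have y00 : y = 0 by apply/eqP; rewrite eq_le hy y0.
    subst y; move: ve; rewrite scale0r addr0 => ve; subst v.
    have : 0 < g x.
      apply: hmin => z; have := vs z; by rewrite dotv0l addr0.
    lra.
  split => //; move/eqP: cs; rewrite mulf_eq0 => /orP[/eqP|/eqP] //; lra.
have vE : forall x y, KKT f g x y -> subgrad f x (- (y *: grad g x)).
  move=> x y [_ _ _ [v vs ve]].
  by have -> : - (y *: grad g x) = v by apply/eqP; rewrite eq_sym -addr_eq0 ve.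
have key : forall x1 y1 x2 y2, KKT f g x1 y1 -> KKT f g x2 y2 ->
    f x1 + y1 * (mu / 2 * enorm (x2 - x1) ^+ 2) <= f x2.
  move=> x1 y1 x2 y2 k1 k2.
  have [y1p g1] := ypos _ _ k1; have [y2p g2] := ypos _ _ k2.
  have h1 := vE _ _ k1 x2.
  have h2 := hGI x1 x2.
  rewrite dotvNl dotvZl in h1; rewrite g1 g2 in h2.
  nra.
have fpos : forall x y, KKT f g x y -> 0 < f x.
  move=> x y k; have [_ gx] := ypos _ _ k.
  have := f_ge0 blk hp x; rewrite le_eqVlt => /orP[/eqP fx0|] //.
  have : 0 < g x by apply: hmin => z; rewrite -fx0; exact: f_ge0.
  lra.
have fdot : forall x y, KKT f g x y -> f x = - (y * dotv (grad g x) x).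
  move=> x y k.
  have h0 := vE _ _ k 0.
  have h2 := vE _ _ k (x + x).
  have h3 := f_triangle blk hp x x.
  rewrite /f in h0 h2 h3 *.
  rewrite (f0 blk p) sub0r dotvC dotvNl dotvC in h0.
  rewrite addrK in h2.
  rewrite dotvNl dotvZl in h0 h2.
  lra.
have uniq : forall x1 y1 x2 y2, KKT f g x1 y1 -> KKT f g x2 y2 -> x1 = x2 /\ y1 = y2.
  move=> x1 y1 x2 y2 k1 k2.
  have ka := key _ _ _ _ k1 k2; have kb := key _ _ _ _ k2 k1.
  have [y1p _] := ypos _ _ k1; have [y2p _] := ypos _ _ k2.
  have eN : enorm (x1 - x2) = enorm (x2 - x1).
    by rewrite -opprB -scaleN1r enormZ normrN normr1 mul1r.
  rewrite eN in kb.
  have D0 := sqr_ge0 (enorm (x2 - x1)).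
  have Dle : enorm (x2 - x1) ^+ 2 <= 0.
    have : (y1 + y2) * (mu / 2) * enorm (x2 - x1) ^+ 2 <= 0 by nra.
    have : 0 < (y1 + y2) * (mu / 2) by apply: mulr_gt0; lra.
    nra.
  have : dotv (x2 - x1) (x2 - x1) = 0 by rewrite -enorm_sq; apply/eqP; rewrite eq_le Dle D0.
  move/dotv_eq0/eqP; rewrite subr_eq0 => /eqP x21; subst x2.
  split => //.
  have e1 := fdot _ _ k1; have e2 := fdot _ _ k2; have fp := fpos _ _ k1.
  set G := dotv (grad g x1) x1 in e1 e2.
  have : (y1 - y2) * G = 0 by rewrite mulrBl; apply/eqP; rewrite subr_eq0; apply/eqP; lra.
  move/eqP; rewrite mulf_eq0 => /orP[/eqP h|/eqP h]; first lra.
  by rewrite h mulr0 oppr0 in e1; lra.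
suff [xs [ys kxy]] : exists x y, KKT f g x y.
  exists xs, ys; split => // x' y' k'; exact: uniq k' kxy.
pose A := [set x : 'rV[R]_n | g x <= 0]%classic.
have gc : continuous g by move=> x; exact: differentiable_continuous.
have Acl : closed A.
  exact: ((continuous_closedP g).1 gc _ (@closed_le R 0)).
have Abd : bounded_set A.
  set G := grad g xt; set a := - g xt; set gn := enorm G.
  have a0 : 0 < a by rewrite /a; lra.
  have gn0 : 0 <= gn by exact: enorm_ge0.
  set M0 := 1 + 2 * (a + gn) / mu + enorm xt.
  have bnd : forall x, A x -> `|x| <= M0.
    move=> x Ax; rewrite /A /= in Ax.
    set D := enorm (x - xt).
    have h := hGI xt x; rewrite -/G -/D in h.
    have hc := CS (- G) (x - xt).
    have eG : enorm (- G) = gn by rewrite -scaleN1r enormZ normrN normr1 mul1r.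
    rewrite dotvNl eG -/D in hc.
    have D0 : 0 <= D by exact: enorm_ge0.
    have hD : D <= 1 + 2 * (a + gn) / mu.
      have q0 : 0 <= 2 * (a + gn) / mu by apply: divr_ge0; lra.
      case: (lerP D 1) => hD1; first lra.
      suff : D <= 2 * (a + gn) / mu by lra.
      rewrite ler_pdivlMr //.
      have : mu / 2 * D ^+ 2 <= a + gn * D by rewrite /a; lra.
      nra.
    apply: le_trans (mx_le_enorm x) _.
    have := enorm_triangle (x - xt) xt; rewrite subrK -/D => ht.
    rewrite /M0; lra.
  exists M0; split; first exact: num_real.
  by move=> M hM x Ax; apply: le_trans (bnd x Ax) (ltW hM).
have Acp : compact A := bounded_closed_compact Abd Acl.
have A0 : A !=set0 by exists xt; rewrite /A /=; lra.
have fcA : {within A, continuous f}.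
  by apply: continuous_subspaceT; exact: f_continuous.
have [xs xsA xsmin] := compact_EVT_min A0 Acp fcA.
have gxs : g xs <= 0 by move/set_mem: xsA.
have fmin : forall z, g z <= 0 -> f xs <= f z.
  by move=> z gz; apply: xsmin; exact: mem_set.
pose S := [set r : R | exists2 x, g x < 0 & r = (f x - f xs) / (- g x)]%classic.
have S0 : S !=set0 by exists ((f xt - f xs) / (- g xt)); exists xt.
have Slb : lbound S 0.
  move=> r [x gx ->]; apply: divr_ge0; last lra.
  have := fmin x (ltW gx); lra.
have Shl : has_lbound S by exists 0.
set y := inf S.
have y0 : 0 <= y by exact: lb_le_inf.
have yle : forall x, g x < 0 -> y <= (f x - f xs) / (- g x).
  by move=> x gx; apply: (ge_inf Shl); exists x.
have sep : forall x1 x2, 0 < g x1 -> g x2 < 0 ->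
    (f xs - f x1) / g x1 <= (f x2 - f xs) / (- g x2).
  move=> x1 x2 g1 g2.
  set l := - g x2 / (g x1 - g x2).
  have l0 : 0 <= l by apply: divr_ge0; lra.
  have l1 : l <= 1 by rewrite ler_pdivrMr; lra.
  have e0 : l * g x1 + (1 - l) * g x2 = 0.
    rewrite /l; field; lra.
  have hz := g_convex mu0 hsc x1 x2 l0 l1.
  have fz := fmin _ (ltac:(lra) : g (l *: x1 + (1 - l) *: x2) <= 0).
  have fz2 := hfc x1 x2 l l0 l1.
  have e1 : (g x1 - g x2) * (l * f x1 + (1 - l) * f x2) = - g x2 * f x1 + g x1 * f x2.
    rewrite /l; field; lra.
  have h : (g x1 - g x2) * f xs <= - g x2 * f x1 + g x1 * f x2.
    rewrite -e1; apply: ler_wpM2l; lra.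
  rewrite ler_pdivrMr // mulrAC ler_pdivlMr; last lra.
  nra.
have hL : forall z, f xs <= f z + y * g z.
  move=> z; case: (ltrgtP (g z) 0) => gz.
  - have := yle z gz; rewrite ler_pdivlMr; last lra.
    lra.
  - have : (f xs - f z) / g z <= y.
      apply: lb_le_inf => // r [x gx ->]; exact: sep.
    rewrite ler_pdivrMr //; lra.
  - rewrite gz mulr0 addr0; apply: fmin; lra.
have cs : y * g xs = 0.
  have := hL xs; have : y * g xs <= 0 by rewrite mulr_ge0_le0.
  lra.
exists xs, y; split => //.
exists (- (y *: grad g xs)); last by rewrite addNr.
apply: (subgrad_min hdiff hfc y0) => z.
rewrite cs addr0; exact: hL.
Qed.
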